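(* Let $v_1\ge v_2>0$ with $v_2<2$. A strategy profile $(X,Y)$ is a Nash equilibrium of the discrete all-pay auction with valuations $v_1,v_2$ if and only if $Y=\delta_0$ and: if $v_1/2>1$ then $X=\delta_1$; if $v_1/2=1$ then $X=(1-\alpha)\delta_0+\alpha\delta_1$ for some $\alpha\in[0,1]$; if $v_1/2<1$ then $X=\delta_0$.
   Context: Discrete all-pay auction: two players, 1 and 2, value a prize at $v_1$ and $v_2$ respectively, where $v_1\ge v_2>0$. A (mixed) strategy is a probability distribution on $\mathbb{Z}_{\ge 0}$ with finite mean, identified with a $\mathbb{Z}_{\ge0}$-valued random variable; the two players' choices are independent. If player 1 uses $X$ and player 2 uses $Y$, the expected payoffs are $P^1(X,Y)=v_1\Pr(X>Y)+\frac{v_1}{2}\Pr(X=Y)-\mathbf{E}(X)$ and $P^2(Y,X)=v_2\Pr(Y>X)+\frac{v_2}{2}\Pr(X=Y)-\mathbf{E}(Y)$. A Nash equilibrium of the all-pay auction is a pair $(X,Y)$ with $P^1(X,Y)\ge P^1(X',Y)$ and $P^2(Y,X)\ge P^2(Y',X)$ for all strategies $X',Y'$. $\delta_j$ denotes the point mass at $j$; $(1-\alpha)\delta_0+\alpha\delta_1$ is the mixture. *)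

(* Defs.v *)
From Stdlib Require Import Reals Lra.
From Coquelicot Require Import Coquelicot.
Open Scope R_scope.

Definition is_strategy (p : nat -> R) : Prop :=
  (forall n, 0 <= p n) /\ is_series p 1 /\ ex_series (fun n => INR n * p n).

Definition mean (p : nat -> R) : R := Series (fun n => INR n * p n).

(* lt_mass q n = Pr(Y < n) = sum_{m<n} q m *)
Fixpoint lt_mass (q : nat -> R) (n : nat) : R :=
  match n with
  | O => 0
  | S k => lt_mass q k + q k
  end.

Definition prob_gt (p q : nat -> R) : R := Series (fun n => p n * lt_mass q n).

Definition prob_eq (p q : nat -> R) : R := Series (fun n => p n * q n).

Definition payoff (v : R) (p q : nat -> R) : R :=
  v * prob_gt p q + v / 2 * prob_eq p q - mean p.

Definition nash (v1 v2 : R) (p q : nat -> R) : Prop :=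
  is_strategy p /\ is_strategy q /\
  (forall p', is_strategy p' -> payoff v1 p' q <= payoff v1 p q) /\
  (forall q', is_strategy q' -> payoff v2 q' p <= payoff v2 q p).

Definition delta (j : nat) : nat -> R := fun n => if Nat.eqb n j then 1 else 0.

(* Main.v *)
Require Import Defs.
From Stdlib Require Import Reals Lra Lia FunctionalExtensionality.
From Coquelicot Require Import Coquelicot.
Open Scope R_scope.

Definition F (v : R) (q : nat -> R) (n : nat) : R :=
  v * lt_mass q n + v / 2 * q n - INR n.

Lemma series_of_lim (a : nat -> R) (K : nat) (s : R) :
  (forall N, (K <= N)%nat -> sum_n a N = s) -> is_series a s.
Proof.
  intros H. unfold is_series.
  assert (Hl : is_lim_seq (sum_n a) s).
  { apply (is_lim_seq_ext_loc (fun _ => s)). exists K. intros N HN. now rewrite H.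
    apply is_lim_seq_const. }
  exact Hl.
Qed.

Lemma lim_of_series (a : nat -> R) (s : R) : is_series a s -> is_lim_seq (sum_n a) s.
Proof. intros H. exact H. Qed.

Lemma finite_series (a : nat -> R) (K : nat) :
  (forall n, (K < n)%nat -> a n = 0) -> is_series a (sum_n a K).
Proof.
  intros H. apply (series_of_lim _ K). intros N HN.
  replace N with (K + (N - K))%nat by lia.
  induction (N - K)%nat as [|d IH].
  - now rewrite Nat.add_0_r.
  - rewrite Nat.add_succ_r, sum_Sn, IH, H by lia. unfold plus; simpl. ring.
Qed.

Lemma single_series (a : nat -> R) (k : nat) :
  (forall n, n <> k -> a n = 0) -> is_series a (a k).
Proof.
  intros H. apply (series_of_lim _ k).
  assert (G : forall N, sum_n a N = if Nat.leb k N then a k else 0).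
  { induction N as [|N IH].
    - rewrite sum_O. destruct k; simpl; [reflexivity|]. apply H; lia.
    - rewrite sum_Sn, IH. unfold plus; simpl.
      destruct (Nat.leb_spec k N); destruct (Nat.leb_spec k (S N)); try lia.
      + rewrite (H (S N)) by lia. ring.
      + assert (k = S N) by lia. subst. ring.
      + rewrite (H (S N)) by lia. ring. }
  intros N HN. rewrite G. destruct (Nat.leb_spec k N); [reflexivity|lia].
Qed.

Lemma partial_le (a : nat -> R) (l : R) :
  (forall n, 0 <= a n) -> is_series a l -> forall n, sum_n a n <= l.
Proof.
  intros Ha Hs. apply is_lim_seq_incr_compare. exact (lim_of_series _ _ Hs).
  intros n. rewrite sum_Sn. unfold plus; simpl. specialize (Ha (S n)). lra.
Qed.

Lemma term_le_sum (a : nat -> R) : (forall n, 0 <= a n) -> forall n, a n <= sum_n a n.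
Proof.
  intros Ha n. destruct n. rewrite sum_O; lra.
  rewrite sum_Sn. unfold plus; simpl.
  assert (0 <= sum_n a n).
  { induction n. rewrite sum_O; apply Ha. rewrite sum_Sn. unfold plus; simpl.
    specialize (Ha (S n)). lra. }
  lra.
Qed.

Lemma term_le_series (a : nat -> R) :
  (forall n, 0 <= a n) -> ex_series a -> forall n, a n <= Series a.
Proof.
  intros Ha He n. eapply Rle_trans. apply term_le_sum; auto.
  apply partial_le; auto. apply Series_correct; auto.
Qed.

Lemma lt_mass_sum (q : nat -> R) n : lt_mass q (S n) = sum_n q n.
Proof.
  induction n. rewrite sum_O. simpl. ring.
  change (lt_mass q (S (S n))) with (lt_mass q (S n) + q (S n)).
  rewrite IHn, sum_Sn. reflexivity.
Qed.

Lemma lt_mass_nonneg (q : nat -> R) : (forall n, 0 <= q n) -> forall n, 0 <= lt_mass q n.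
Proof. intros H n. induction n; simpl. lra. specialize (H n). lra. Qed.

Lemma lt_mass_bound (q : nat -> R) : is_strategy q -> forall n, lt_mass q n + q n <= 1.
Proof.
  intros [H1 [H2 _]] n. change (lt_mass q (S n) <= 1). rewrite lt_mass_sum.
  apply partial_le; auto.
Qed.

Lemma ex_series_minusR (a b : nat -> R) : ex_series a -> ex_series b ->
  ex_series (fun n => a n - b n).
Proof. intros. apply (ex_series_ext (fun n => plus (a n) (opp (b n)))). reflexivity.
  now apply (ex_series_minus (V:=R_NormedModule)). Qed.
Lemma ex_series_plusR (a b : nat -> R) : ex_series a -> ex_series b ->
  ex_series (fun n => a n + b n).
Proof. intros. now apply (ex_series_plus (V:=R_NormedModule) a b). Qed.
Lemma ex_series_scalR (c : R) (a : nat -> R) : ex_series a ->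
  ex_series (fun n => c * a n).
Proof. intros. now apply (ex_series_scal_l (V:=R_NormedModule) c a). Qed.

Lemma payoff_F (v : R) (p q : nat -> R) : is_strategy p -> is_strategy q ->
  ex_series (fun n => p n * F v q n) /\ payoff v p q = Series (fun n => p n * F v q n).
Proof.
  intros Hp Hq. pose proof Hp as [Hp0 [Hp1 Hp2]]. pose proof Hq as [Hq0 [Hq1 Hq2]].
  assert (Ep : ex_series p) by (exists 1; exact Hp1).
  assert (E1 : ex_series (fun n => p n * lt_mass q n)).
  { apply (ex_series_le (V:=R_CompleteNormedModule) _ p); auto. intros n. change norm with Rabs. simpl.
    pose proof (lt_mass_nonneg q Hq0 n). pose proof (lt_mass_bound q Hq n).
    pose proof (Hp0 n). pose proof (Hq0 n).
    rewrite Rabs_pos_eq by nra. nra. }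
  assert (E2 : ex_series (fun n => p n * q n)).
  { apply (ex_series_le (V:=R_CompleteNormedModule) _ p); auto. intros n. change norm with Rabs. simpl.
    pose proof (lt_mass_nonneg q Hq0 n). pose proof (lt_mass_bound q Hq n).
    pose proof (Hp0 n). pose proof (Hq0 n).
    rewrite Rabs_pos_eq by nra. nra. }
  assert (E : ex_series (fun n => v * (p n * lt_mass q n) + v / 2 * (p n * q n)
                                   - INR n * p n)).
  { apply ex_series_minusR; auto. apply ex_series_plusR; apply ex_series_scalR; auto. }
  assert (Eq : forall n, v * (p n * lt_mass q n) + v / 2 * (p n * q n) - INR n * p n
                  = p n * F v q n) by (intros; unfold F; ring).
  split.
  - eapply ex_series_ext. exact Eq. exact E.
  - rewrite <- (Series_ext _ _ Eq). unfold payoff, prob_gt, prob_eq, mean.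
    rewrite Series_minus.
    + rewrite Series_plus by (apply ex_series_scalR; auto). rewrite !Series_scal_l. ring.
    + apply ex_series_plusR; apply ex_series_scalR; auto.
    + auto.
Qed.

Lemma nonneg_gap (p G : nat -> R) (M : R) : is_strategy p ->
  ex_series (fun n => p n * G n) ->
  Series (fun n => p n * (M - G n)) = M - Series (fun n => p n * G n)
  /\ ex_series (fun n => p n * (M - G n)).
Proof.
  intros [H0 [H1 H2]] E.
  assert (Ep : ex_series p) by (exists 1; exact H1).
  assert (EM : ex_series (fun n => M * p n)) by (apply ex_series_scalR; auto).
  assert (Eq : forall n, M * p n - p n * G n = p n * (M - G n)) by (intros; ring).
  split.
  - rewrite <- (Series_ext _ _ Eq), Series_minus by auto. rewrite Series_scal_l.
    rewrite (is_series_unique p 1 H1). ring.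
  - eapply ex_series_ext. exact Eq. apply ex_series_minusR; auto.
Qed.

Lemma bound_le (p G : nat -> R) (M : R) : is_strategy p ->
  ex_series (fun n => p n * G n) -> (forall n, G n <= M) ->
  Series (fun n => p n * G n) <= M.
Proof.
  intros Hp E HG. destruct (nonneg_gap p G M Hp E) as [Eq E'].
  destruct Hp as [H0 _].
  assert (0 <= p 0%nat * (M - G 0%nat)) by (specialize (H0 0%nat); specialize (HG 0%nat); nra).
  assert (Hn : forall n, 0 <= p n * (M - G n)) by (intros n; specialize (H0 n); specialize (HG n); nra).
  pose proof (term_le_series _ Hn E' 0%nat). lra.
Qed.

Lemma support (p G : nat -> R) (M c : R) (k : nat) : is_strategy p ->
  ex_series (fun n => p n * G n) -> (forall n, G n <= M) ->
  M <= Series (fun n => p n * G n) -> 0 < c -> G k <= M - c -> p k = 0.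
Proof.
  intros Hp E HG HM Hc Hk. destruct (nonneg_gap p G M Hp E) as [Eq E'].
  pose proof Hp as [H0 _].
  assert (Hn : forall n, 0 <= p n * (M - G n)) by (intros n; specialize (H0 n); specialize (HG n); nra).
  pose proof (term_le_series _ Hn E' k).
  specialize (H0 k). nra.
Qed.

Lemma delta_strategy k : is_strategy (delta k).
Proof.
  assert (Hd : forall n, n <> k -> delta k n = 0).
  { intros n Hn. unfold delta. apply Nat.eqb_neq in Hn. now rewrite Hn. }
  assert (Hk : delta k k = 1) by (unfold delta; now rewrite Nat.eqb_refl).
  split; [|split].
  - intros n. unfold delta. destruct (Nat.eqb n k); lra.
  - pose proof (single_series (delta k) k Hd) as Hs. now rewrite Hk in Hs.
  - eexists. apply (single_series _ k). intros n Hn. rewrite Hd by auto. ring.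
Qed.

Lemma payoff_delta v k q : is_strategy q -> payoff v (delta k) q = F v q k.
Proof.
  intros Hq. destruct (payoff_F v (delta k) q (delta_strategy k) Hq) as [_ ->].
  replace (F v q k) with (delta k k * F v q k) by (unfold delta; rewrite Nat.eqb_refl; ring).
  apply is_series_unique, (single_series (fun n => delta k n * F v q n) k). intros n Hn. unfold delta.
  apply Nat.eqb_neq in Hn. rewrite Hn. ring.
Qed.

Lemma lt_mass_delta0 n : lt_mass (delta 0) (S n) = 1.
Proof. induction n. simpl. unfold delta; simpl. ring. simpl in *. rewrite IHn. unfold delta. simpl. ring. Qed.

Lemma F1_0 v : F v (delta 0) 0 = v / 2.
Proof. unfold F, delta. simpl. ring. Qed.
Lemma F1_S v n : F v (delta 0) (S n) = v - INR (S n).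
Proof. unfold F. rewrite lt_mass_delta0. unfold delta. simpl. ring. Qed.

Lemma F2_bound v p n : is_strategy p -> 0 < v -> v <= 2 -> (1 <= n)%nat ->
  F v p n <= F v p 0 - (1 - v / 2).
Proof.
  intros Hp Hv Hv2 Hn. pose proof Hp as [H0 _]. unfold F. change (lt_mass p 0) with 0. change (INR 0) with 0.
  destruct n as [|[|n]]; [lia| |].
  - simpl. pose proof (lt_mass_bound p Hp 1). simpl in H. pose proof (H0 0%nat). pose proof (H0 1%nat). 
    assert (v/2 * (p 0%nat + p 1%nat) <= v/2 * 1) by (apply Rmult_le_compat_l; lra). lra.
  - pose proof (lt_mass_bound p Hp (S (S n))). pose proof (lt_mass_nonneg p H0 (S (S n))).
    pose proof (H0 (S (S n))). pose proof (H0 0%nat).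
    assert (2 <= INR (S (S n))) by (rewrite !S_INR; pose proof (pos_INR n); lra).
    assert (v * (lt_mass p (S (S n)) + p (S (S n))) <= v * 1) by (apply Rmult_le_compat_l; lra).
    assert (0 <= v * p (S (S n))) by (apply Rmult_le_pos; lra).
    assert (0 <= v * p 0%nat) by (apply Rmult_le_pos; lra).
    lra.
Qed.

Lemma INR_S_ge1 n : 1 <= INR (S n).
Proof. rewrite S_INR; pose proof (pos_INR n); lra. Qed.
Lemma INR_SS_ge2 n : 2 <= INR (S (S n)).
Proof. rewrite !S_INR; pose proof (pos_INR n); lra. Qed.

Lemma F1_le v M : v / 2 <= M -> v - 1 <= M -> forall m, F v (delta 0) m <= M.
Proof. intros H1 H2 [|m]. now rewrite F1_0. rewrite F1_S. pose proof (INR_S_ge1 m). lra. Qed.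

Lemma two_point_payoff v p : is_strategy p -> (forall n, (1 < n)%nat -> p n = 0) ->
  payoff v p (delta 0) = p 0%nat * (v / 2) + p 1%nat * (v - 1).
Proof.
  intros Hp Hz. destruct (payoff_F v p (delta 0) Hp (delta_strategy 0)) as [_ ->].
  assert (Hz' : forall n, (1 < n)%nat -> p n * F v (delta 0) n = 0)
    by (intros n Hn; rewrite (Hz n Hn); ring).
  rewrite (is_series_unique _ _ (finite_series (fun n => p n * F v (delta 0) n) 1 Hz')).
  rewrite sum_Sn, sum_O. unfold plus; simpl. rewrite F1_0, F1_S. simpl. ring.
Qed.

Theorem theorem4 (v1 v2 : R) (p q : nat -> R) :
  v2 <= v1 -> 0 < v2 -> v2 < 2 ->
  is_strategy p -> is_strategy q ->
  (nash v1 v2 p q <->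
   ((forall n, q n = delta 0 n) /\
    (1 < v1 / 2 -> forall n, p n = delta 1 n) /\
    (v1 / 2 = 1 -> exists alpha, 0 <= alpha <= 1 /\
        forall n, p n = (1 - alpha) * delta 0 n + alpha * delta 1 n) /\
    (v1 / 2 < 1 -> forall n, p n = delta 0 n))).
Proof.
  intros Hv12 Hv2 Hv22 Hp Hq. split.
  - intros [_ [_ [N1 N2]]].
    destruct (payoff_F v2 q p Hq Hp) as [Eq2 Pq2].
    pose proof (N2 (delta 0) (delta_strategy 0)) as H.
    rewrite payoff_delta, Pq2 in H by auto.
    assert (B2 : forall m, F v2 p m <= F v2 p 0).
    { intros [|m]; [lra|]. pose proof (F2_bound v2 p (S m) Hp Hv2 ltac:(lra) ltac:(lia)). lra. }
    assert (Hq0 : forall n, (1 <= n)%nat -> q n = 0).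
    { intros n Hn. apply (support q (F v2 p) (F v2 p 0) (1 - v2 / 2) n Hq Eq2 B2 H); [lra|].
      apply F2_bound; auto; lra. }
    assert (q0 : q 0%nat = 1).
    { pose proof (finite_series q 0 (fun n Hn => Hq0 n Hn)) as Hs. rewrite sum_O in Hs.
      destruct Hq as [_ [Hq1 _]].
      rewrite <- (is_series_unique _ _ Hs). now apply is_series_unique. }
    assert (Eqq : q = delta 0).
    { apply functional_extensionality. intros [|n]; unfold delta; simpl; auto.
      apply Hq0; lia. }
    subst q.
    destruct (payoff_F v1 p (delta 0) Hp Hq) as [Eq1 Pq1].
    assert (D : forall k, F v1 (delta 0) k <= Series (fun n => p n * F v1 (delta 0) n)).
    { intros k. rewrite <- Pq1, <- payoff_delta by auto. apply N1, delta_strategy. }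
    pose proof (D 0%nat) as D0. pose proof (D 1%nat) as D1.
    rewrite F1_0 in D0. rewrite F1_S in D1. simpl INR in D1.
    pose proof Hp as [Hp0 [Hp1 _]].
    split; [intros; reflexivity|]. split; [|split].
    + intros Hv.
      assert (Z : forall n, n <> 1%nat -> p n = 0).
      { intros [|[|n]] Hn.
        - apply (support p _ (v1 - 1) (v1 / 2 - 1) 0 Hp Eq1); try lra.
          apply F1_le; lra. rewrite F1_0; lra.
        - lia.
        - apply (support p _ (v1 - 1) 1 _ Hp Eq1); try lra.
          apply F1_le; lra. rewrite F1_S. pose proof (INR_SS_ge2 n). lra. }
      assert (P1 : p 1%nat = 1).
      { pose proof (single_series p 1 Z) as Hs. rewrite <- (is_series_unique _ _ Hs).
        now apply is_series_unique. }
      intros [|[|n]]; unfold delta; simpl; auto; try (apply Z; lia).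
    + intros Hv.
      assert (Z : forall n, (1 < n)%nat -> p n = 0).
      { intros n Hn. destruct n as [|[|n]]; try lia.
        apply (support p _ 1 1 _ Hp Eq1); try lra.
        apply F1_le; lra. rewrite F1_S. pose proof (INR_SS_ge2 n). lra. }
      assert (P01 : p 0%nat + p 1%nat = 1).
      { pose proof (finite_series p 1 Z) as Hs. rewrite sum_Sn, sum_O in Hs. change (is_series p (p 0%nat + p 1%nat)) in Hs.
        rewrite <- (is_series_unique _ _ Hs). now apply is_series_unique. }
      exists (p 1%nat). pose proof (Hp0 0%nat). pose proof (Hp0 1%nat). split; [lra|].
      intros [|[|n]]; unfold delta; simpl. lra. ring. rewrite Z by lia. ring.
    + intros Hv.
      assert (Z : forall n, n <> 0%nat -> p n = 0).
      { intros [|n] Hn; [lia|].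
        apply (support p _ (v1 / 2) (1 - v1 / 2) _ Hp Eq1); try lra.
        apply F1_le; lra. rewrite F1_S. pose proof (INR_S_ge1 n). lra. }
      assert (P0 : p 0%nat = 1).
      { pose proof (single_series p 0 Z) as Hs. rewrite <- (is_series_unique _ _ Hs).
        now apply is_series_unique. }
      intros [|n]; unfold delta; simpl; auto; try (apply Z; lia).
  - intros [Hq0 [C1 [C2 C3]]].
    assert (Eqq : q = delta 0) by (apply functional_extensionality; exact Hq0).
    subst q.
    split; [exact Hp|]. split; [exact Hq|]. split.
    + intros p' Hp'. destruct (payoff_F v1 p' (delta 0) Hp' Hq) as [E' ->].
      destruct (Rtotal_order (v1 / 2) 1) as [Hlt|[Heq|Hgt]].
      * assert (Ep : p = delta 0) by (apply functional_extensionality; auto). subst p.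
        rewrite payoff_delta, F1_0 by auto. apply bound_le; auto. apply F1_le; lra.
      * destruct (C2 Heq) as [a [Ha Hpa]].
        assert (Z : forall n, (1 < n)%nat -> p n = 0).
        { intros n Hn. rewrite Hpa. unfold delta. destruct n as [|[|n]]; try lia. simpl. ring. }
        rewrite (two_point_payoff v1 p Hp Z), !Hpa. eapply Rle_trans.
        apply (bound_le p' _ 1); [auto|exact E'|apply F1_le; lra].
        unfold delta; simpl. replace v1 with 2 by lra. lra.
      * assert (Ep : p = delta 1) by (apply functional_extensionality; auto). subst p.
        rewrite payoff_delta, F1_S by auto. simpl INR. apply bound_le; auto. apply F1_le; lra.
    + intros q' Hq'. destruct (payoff_F v2 q' p Hq' Hp) as [E' ->].
      rewrite payoff_delta by auto. apply bound_le; auto.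
      intros [|m]; [lra|]. pose proof (F2_bound v2 p (S m) Hp Hv2 ltac:(lra) ltac:(lia)). lra.
Qed.
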